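(* Let $\delta>0$ and let $\mathcal{G}$ be a class of graphs, each of average degree at least $2+\delta$, with unbounded girth. Let $\mathcal{A}$ be the class of all (unweighted) orientations of graphs in $\mathcal{G}$. Then $\mathcal{A}$ is not size-pliable.
   Context: An orientation of a graph is viewed as a structure over the signature $\{e\}$ with one binary symbol, where $e^{\mathbb{A}}(u,v)=1$ if $u\to v$ is an arc and $0$ otherwise. For structures $\mathbb{A},\mathbb{B}$ over a signature $\sigma$ (finite domain with functions $f^{\mathbb{A}}\colon A^{\mathrm{ar}(f)}\to\mathbb{Q}_{\ge0}$), $\mathrm{opt}(\mathbb{A},\mathbb{B})=\max_{h\colon A\to B}\sum_f\sum_{\bar x}f^{\mathbb{A}}(\bar x)f^{\mathbb{B}}(h(\bar x))$ over all maps, and $d_{\mathrm{opt}}(\mathbb{A},\mathbb{B})=\sup_{\mathbb{C}}|\ln\mathrm{opt}(\mathbb{A},\mathbb{C})-\ln\mathrm{opt}(\mathbb{B},\mathbb{C})|$ over all $\sigma$-structures $\mathbb{C}$ ($\ln0=-\infty$, $|\ln0-\ln0|=0$). A class $\mathcal{A}$ is size-pliable if for every $\varepsilon>0$ there is $k$ such that every $\mathbb{A}\in\mathcal{A}$ (signature $\sigma$) has a $\sigma$-structure $\mathbb{B}$ with domain of size at most $k$ and $d_{\mathrm{opt}}(\mathbb{A},\mathbb{B})\le\varepsilon$. *)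

(* Defs.v *)
From HB Require Import structures.
From mathcomp Require Import all_boot all_order all_algebra.
From mathcomp Require Import all_classical all_reals.
From mathcomp Require Import ereal exp.

Set Implicit Arguments.
Unset Strict Implicit.
Unset Printing Implicit Defensive.

Import Order.TTheory GRing.Theory Num.Theory.
Local Open Scope ring_scope.

Record struct := Struct {
  sdom : nat;
  srel : 'I_sdom -> 'I_sdom -> rat;
  srel_ge0 : forall u v, 0 <= srel u v }.

(* opt(A,B) = max over all maps h : A -> B of sum_{u,v} e^A(u,v) e^B(h u, h v).
   (If there is no map at all, i.e. B empty and A nonempty, the max is 0.) *)
Definition opt (A B : struct) : rat :=
  \big[Num.max/0]_(h : {ffun 'I_(sdom A) -> 'I_(sdom B)})
     \sum_(u : 'I_(sdom A)) \sum_(v : 'I_(sdom A))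
        @srel A u v * @srel B (h u) (h v).

(* |ln a - ln b| with ln 0 = -oo and |ln 0 - ln 0| = 0 *)
Definition lndist (R : realType) (a b : rat) : \bar R :=
  if (a == 0) && (b == 0) then 0%E
  else if (a == 0) || (b == 0) then +oo%E
  else (`| ln (ratr a : R) - ln (ratr b) |)%:E.

Definition dopt (R : realType) (A B : struct) : \bar R :=
  ereal_sup [set lndist R (opt A C) (opt B C) | C in [set: struct]].

Definition size_pliable (R : realType) (cls : struct -> Prop) : Prop :=
  forall eps : R, 0 < eps ->
  exists k : nat, forall A, cls A ->
    exists B : struct, (sdom B <= k)%N /\ (dopt R A B <= eps%:E)%E.

Record graph := Graph {
  gn : nat;
  gadj : rel 'I_gn;
  gadj_sym : symmetric gadj;
  gadj_irr : irreflexive gadj }.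

Definition gdeg (G : graph) (v : 'I_(gn G)) : nat := #|[set u | @gadj G v u]|.

Definition avg_degree (R : realType) (G : graph) : R :=
  (\sum_(v : 'I_(gn G)) gdeg v)%:R / (gn G)%:R.

Definition girth_ge (G : graph) (g : nat) : Prop :=
  forall s : seq 'I_(gn G), uniq s -> (3 <= size s)%N -> cycle (@gadj G) s ->
    (g <= size s)%N.

Definition unbounded_girth (cG : graph -> Prop) : Prop :=
  forall g : nat, exists G, cG G /\ girth_ge G g.

Definition is_orientation (G : graph) (o : rel 'I_(gn G)) : Prop :=
  forall u v, @gadj G u v = o u v || o v u /\ ~~ (o u v && o v u).

Lemma orient_ge0 n (o : rel 'I_n) u v : 0 <= ((o u v)%:R : rat).
Proof. exact: ler0n. Qed.

Definition struct_of_rel n (o : rel 'I_n) : struct :=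
  @Struct n (fun u v => (o u v)%:R) (@orient_ge0 n o).

Definition orientations_of (cG : graph -> Prop) (A : struct) : Prop :=
  exists G : graph, cG G /\
  exists o : rel 'I_(gn G), is_orientation o /\ A = struct_of_rel o.

(* Main.v *)
Require Import Defs.
From mathcomp Require Import all_boot all_order all_algebra.
From mathcomp Require Import zify ring.
Import Order.TTheory GRing.Theory Num.Theory.

Set Implicit Arguments.
Unset Strict Implicit.
Unset Printing Implicit Defensive.

Section Leaf.
Variable G : graph.
Local Notation V := 'I_(gn G).
Local Notation adj := (@gadj G).

Definition ipath (I : {set V}) (s : seq V) :=
  [&& uniq s, all (mem I) s & (if s is x :: p then path adj x p else false)].

Lemma ipath_size I s : ipath I s -> (size s <= #|I|)%N.
Proof.
case/and3P=> us /allP aI _; rewrite cardE -(size_map val).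
rewrite size_map; apply: uniq_leq_size => // x xs; rewrite mem_enum; exact: aI.
Qed.

Lemma leaf_exists (g : nat) (I : {set V}) : girth_ge G g -> I != set0 -> (#|I| < g)%N ->
  exists2 x, x \in I & forall y z, y \in I -> z \in I -> adj x y -> adj x z -> y = z.
Proof.
move=> gG /set0Pn [x0 x0I] Ig.
pose P n := [exists t : n.-tuple V, ipath I t].
have P1 : P 1%N by apply/existsP; exists [tuple x0]; rewrite /ipath /= x0I.
have Pb : forall n, P n -> (n <= #|I|)%N.
  by move=> n /existsP [t /ipath_size]; rewrite size_tuple.
have [n Pn nmax] := ex_maxnP (ex_intro P 1%N P1) Pb.
case/existsP: Pn => t ipt.
have {}nmax : forall s, ipath I s -> (size s <= size t)%N.
  move=> s ips; rewrite size_tuple; apply: nmax; apply/existsP.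
  by exists (in_tuple s).
move: ipt nmax; case: (tval t) => [|x p] // ipt nmax.
case/and3P: ipt => uxp axp pxp.
have xI : x \in I by apply: (allP axp); rewrite mem_head.
exists x => //.
move=> y z yI zI axy axz; apply/eqP/negPn/negP => nyz.
have inS : forall w, w \in I -> adj x w -> w \in x :: p.
  move=> w wI axw; apply/negPn/negP => wnot.
  have : ipath I (w :: x :: p).
    rewrite /ipath; apply/and3P; split.
    - by rewrite cons_uniq wnot uxp.
    - apply/allP => v; rewrite inE => /orP [/eqP -> // | ]; exact: (allP axp).
    - by rewrite /= (@gadj_sym G) axw pxp.
  by move/nmax => /=; rewrite ltnn.
have nx : forall w, adj x w -> w != x.
  by move=> w axw; apply/eqP => wx; move: axw; rewrite wx (@gadj_irr G).
case: p uxp axp pxp nmax inS => [|z0 p] uxp axp pxp nmax inS.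
  by move: (inS y yI axy); rewrite inE (negPf (nx _ axy)).
have [w [wI axw wz0]] : exists w, [/\ w \in I, adj x w & w != z0].
  case: (eqVneq y z0) => [yz0|yz0]; last by exists y.
  exists z; split => //; rewrite -yz0 eq_sym; exact: nyz.
have wp : w \in p.
  move: (inS w wI axw); rewrite !inE (negPf (nx _ axw)) (negPf wz0) /=.
  done.
case/path.splitP: wp uxp axp pxp => p1 p2 uxp axp pxp.
have sub : forall s, all (mem I) s -> ipath I s -> True by [].
pose c := x :: z0 :: rcons p1 w.
have ec : x :: z0 :: rcons p1 w ++ p2 = c ++ p2 by [].
have uc : uniq c.
  by move: uxp; rewrite ec cat_uniq => /andP[].
have pc : path adj x (z0 :: rcons p1 w).
  by move: pxp; rewrite -cat_cons cat_path => /andP[].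
have cc : cycle adj c.
  rewrite /c /cycle rcons_path; apply/andP; split; first exact: pc.
  by rewrite /= last_rcons (@gadj_sym G) axw.
have ipc : ipath I c.
  apply/and3P; split; [exact: uc | | exact: pc].
  by apply/allP => v vc; apply: (allP axp); rewrite ec mem_cat vc.
have := gG c uc.
rewrite /c /= size_rcons => /(_ isT cc).
have := ipath_size ipc; rewrite /c /= size_rcons => h1 h2.
by move: (leq_trans h2 h1) (leq_ltn_trans (leq_trans h2 h1) Ig); rewrite ltnn.
Qed.


Lemma orient_adj (o : rel V) : is_orientation o -> forall u v, o u v -> adj u v.
Proof. by move=> oo u v ouv; case: (oo u v) => -> _; rewrite ouv. Qed.

Lemma orient_anti (o : rel V) : is_orientation o -> forall u v, o u v -> ~~ o v u.
Proof. by move=> oo u v ouv; case: (oo u v) => _; rewrite ouv. Qed.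

Lemma orient_irr (o : rel V) : is_orientation o -> forall u, ~~ o u u.
Proof.
move=> oo u; apply/negP => ouu; move: (orient_adj oo ouu).
by rewrite (@gadj_irr G).
Qed.

Lemma local_label (g : nat) (o : rel V) : girth_ge G g -> is_orientation o ->
  forall I : {set V}, (#|I| < g)%N ->
  exists f : V -> 'Z_3, forall x y, x \in I -> y \in I -> o x y -> f y = (f x + 1)%R.
Proof.
move=> gG oo I; move eqn : #|I| => n; elim: n I eqn => [|n IH] I eqn Ig.
  by exists (fun _ => 0%R) => x y; move/card0_eq: eqn => ->; rewrite inE.
have In0 : I != set0 by apply/set0Pn; apply/card_gt0P; rewrite eqn.
have [x xI xleaf] := leaf_exists gG In0 (etrans (congr1 (fun k => k < g)%N eqn) Ig).
have [f' hf'] : exists f : V -> 'Z_3, forall u v, u \in I :\ x -> v \in I :\ x -> o u v -> f v = (f u + 1)%R.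
  apply: IH; last exact: ltnW.
  by move: eqn; rewrite (cardsD1 x I) xI add1n => -[].
case: (pickP [pred y | (y \in I :\ x) && adj x y]) => [y /andP [yI axy] | noy].
- exists (fun v => if v == x then (if o y x then (f' y + 1)%R else (f' y - 1)%R) else f' v).
  move=> u v uI vI ouv.
  have yI' : y \in I by move: yI; rewrite !inE => /andP[].
  case: (eqVneq u x) => [ux | ux]; case: (eqVneq v x) => [vx | vx].
  + by move: ouv; rewrite ux vx (negPf (orient_irr oo x)).
  + have vy : v = y by apply: (xleaf v y vI yI' _ axy); rewrite -ux; exact: (orient_adj oo ouv).
    subst u v; rewrite (negPf (orient_anti oo ouv)).
    by rewrite subrK.
  + have uy : u = y.
      apply: (xleaf u y uI yI' _ axy); rewrite -vx (@gadj_sym G); exact: (orient_adj oo ouv).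
    by subst u v; rewrite ouv.
  + by apply: hf' => //; rewrite !inE ?ux ?vx.
- exists (fun v => f' v) => u v uI vI ouv.
  case: (eqVneq u x) => [ux | ux]; case: (eqVneq v x) => [vx | vx].
  + by move: ouv; rewrite ux vx (negPf (orient_irr oo x)).
  + move: (noy v); rewrite /= !inE vx vI -ux (orient_adj oo ouv) //.
  + move: (noy u); rewrite /= !inE ux uI -vx (@gadj_sym G) (orient_adj oo ouv) //.
  + by apply: hf' => //; rewrite !inE ?ux ?vx.
Qed.

End Leaf.

Lemma z3_noboth : forall a b : 'Z_3, (a == b + 1)%R -> (b == a + 1)%R -> False.
Proof.
by case=> [[|[|[|]]] ?] // [[|[|[|]]] ?].
Qed.

Section Forest.
Variable T : finType.
Variable sr : rel T.
Hypothesis sr_sym : symmetric sr.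

Local Notation rt := (fingraph.root sr).

Lemma rank_ex x : exists n, [exists t : n.-tuple T, path sr x t && (last x t == rt x)].
Proof.
have /connectP [p pp lp] := connect_root sr x.
exists (size p); apply/existsP; exists (in_tuple p); by rewrite /= pp -lp eqxx.
Qed.

Definition rank x := ex_minn (rank_ex x).

Definition par x := odflt x [pick y | sr x y && (rank y < rank x)%N].

Lemma par_spec x : rt x != x -> sr x (par x) && (rank (par x) < rank x)%N.
Proof.
move=> nr; rewrite /par; case: pickP => [y -> //| none].
exfalso; move: none; rewrite /rank; case: ex_minnP => n /existsP [t /andP [pt lt]] nmin none.
have st := size_tuple t.
move: pt lt nmin none st; case: (tval t) => [|y t'] /=.
  by move=> _ /eqP ex; rewrite -ex eqxx in nr.
move=> /andP [sxy pt'] lt nmin noy st; move: (noy y); rewrite /= sxy /=.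
have ry : rt y = rt x.
  apply/esym/(fingraph.rootP (sym_connect_sym sr_sym)); exact: connect1.
case: ex_minnP => k _ kmin; move/negP; apply.
apply: (@leq_ltn_trans (size t')); last by rewrite -st.
apply: kmin; apply/existsP; exists (in_tuple t'); by rewrite /= pt' ry lt.
Qed.

Lemma card_labels (P : {ffun T -> 'Z_3} -> bool) :
  (forall f, P f -> forall x, rt x == x -> f x = 0%R) ->
  (forall f, P f -> forall x y, sr x y -> (f y == f x + 1)%R || (f x == f y + 1)%R) ->
  (#|[set f | P f]| <= 2 ^ #|T|)%N.
Proof.
move=> Pr Pp.
pose bits (f : {ffun T -> 'Z_3}) := [ffun x => (f x == f (par x) + 1)%R].
rewrite -(@card_in_imset _ _ bits); last first.
  move=> f1 f2; rewrite !inE => P1 P2 eqb; apply/ffunP.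
  suff H : forall k x, (rank x < k)%N -> f1 x = f2 x by move=> x; exact: (H (rank x).+1).
  elim=> [//|k IH] x xk.
  case: (eqVneq (rt x) x) => [rx | nrx]; first by rewrite (Pr _ P1 _ (introT eqP rx)) (Pr _ P2 _ (introT eqP rx)).
  have /andP [sxp rp] := par_spec nrx.
  have ep : f1 (par x) = f2 (par x) by apply: IH; apply: leq_trans rp _.
  have eb : (f1 x == f1 (par x) + 1)%R = (f2 x == f2 (par x) + 1)%R.
    by move: (congr1 (fun g : {ffun T -> bool} => g x) eqb); rewrite /bits !ffunE.
  have h1 := Pp _ P1 _ _ sxp; have h2 := Pp _ P2 _ _ sxp.
  case: (boolP (f1 x == f1 (par x) + 1)%R) eb => b1 eb.
    by move/eqP: b1 => ->; move/esym/eqP: eb => ->; rewrite ep.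
  rewrite -eb in h2.
  rewrite (negPf b1) orbF in h1; rewrite orbF in h2.
  move/eqP: h1 => h1; move/eqP: h2 => h2.
  by apply: (@addIr _ 1%R); rewrite -h1 -h2.
apply: leq_trans (max_card _) _.
by rewrite card_ffun card_bool.
Qed.

End Forest.

Lemma card_pair (I J : finType) (P : I -> J -> bool) :
  #|[set p : I * J | P p.1 p.2]| = \sum_i #|[set j | P i j]|.
Proof.
rewrite -sum1dep_card -(pair_big_dep predT (fun i j => P i j) (fun _ _ => 1%N)) /=.
by apply: eq_bigr => i _; rewrite sum1dep_card.
Qed.

Section Count.
Variable G : graph.
Local Notation V := 'I_(gn G).
Local Notation adj := (@gadj G).

Definition Epred (p : V * V) := adj p.1 p.2 && (p.1 < p.2)%N.
Definition Ety := {p : V * V | Epred p}.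
Local Notation m := #|{: Ety}|.

Definition pres (s : {ffun Ety -> bool}) (f : V -> 'Z_3) (e : Ety) :=
  if s e then (f (val e).2 == f (val e).1 + 1)%R else (f (val e).1 == f (val e).2 + 1)%R.
Definition lost s f := [set e | ~~ pres s f e].

Definition sr (L : {set Ety}) : rel V := fun x y =>
  [exists e : Ety, (e \notin L) && ((val e == (x, y)) || (val e == (y, x)))].

Lemma sr_sym L : symmetric (sr L).
Proof.
move=> x y; apply/existsP/existsP => -[e /andP [eL h]]; exists e; rewrite eL /=;
  by rewrite orbC.
Qed.

Definition normal (L : {set Ety}) (f : {ffun V -> 'Z_3}) :=
  [forall x, (fingraph.root (sr L) x == x) ==> (f x == 0%R)] &&
  [forall e : Ety, (e \in L) || ((f (val e).2 == f (val e).1 + 1)%R || (f (val e).1 == f (val e).2 + 1)%R)].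

Lemma card_normal L : (#|[set f | normal L f]| <= 2 ^ gn G)%N.
Proof.
have := @card_labels _ _ (@sr_sym L) (normal L); rewrite card_ord; apply.
  by move=> f /andP [/forallP H _] x rx; apply/eqP; move/implyP: (H x); apply.
move=> f /andP [_ /forallP H] x y /existsP [e /andP [eL /orP [] /eqP ee]];
  move: (H e); rewrite (negPf eL) ee /= => //.
by rewrite orbC.
Qed.

Definition Phi (c : ({set Ety} * {set Ety}) * {ffun V -> 'Z_3}) : {ffun Ety -> bool} :=
  [ffun e => if e \in c.1.1 then e \in c.1.2 else (c.2 (val e).2 == c.2 (val e).1 + 1)%R].

Definition Codes M := [set c : ({set Ety} * {set Ety}) * {ffun V -> 'Z_3} |
  [&& (M * #|c.1.1| < m)%N, c.1.2 \subset c.1.1 & normal c.1.1 c.2]].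

Lemma bad_sub M : [set s | [exists f : {ffun V -> 'Z_3}, (M * #|lost s f| < m)%N]] \subset Phi @: Codes M.
Proof.
apply/subsetP => s; rewrite inE => /existsP [f Mf].
pose L := lost s f.
pose rt := fingraph.root (sr L).
pose f' := [ffun x => f x - f (rt x)]%R.
have same : forall e : Ety, e \notin L -> rt (val e).1 = rt (val e).2.
  move=> e eL; apply/(fingraph.rootP (sym_connect_sym (@sr_sym L))); apply: connect1.
  by apply/existsP; exists e; rewrite eL /= -surjective_pairing eqxx.
have shift : forall e : Ety, e \notin L -> forall (a b : V), rt a = rt b ->
   (f' b == f' a + 1)%R = (f b == f a + 1)%R.
  move=> _ _ a b rab; rewrite !ffunE rab addrAC.
  by apply/eqP/eqP => [/(addIr _) | ->].
apply/imsetP; exists ((L, [set e in L | s e]), f'); last first.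
  apply/ffunP => e; rewrite /Phi ffunE /=.
  case: ifP => eL; first by rewrite inE eL.
  have eL' : e \notin L by rewrite eL.
  move: (eL'); rewrite /L /lost inE /pres negbK.
  rewrite (shift e eL' _ _ (same e eL')).
  case: (s e) => h; first by rewrite h.
  by apply/esym/negbTE/negP => h2; exact: (z3_noboth h h2).
rewrite inE /=; apply/and3P; split => //.
  by apply/subsetP => e; rewrite inE => /andP [].
apply/andP; split.
  apply/forallP => x; apply/implyP => /eqP rx.
  by rewrite ffunE; move: rx; rewrite /rt /L => ->; rewrite subrr.
apply/forallP => e; case: (boolP (e \in L)) => //= eL.
move: eL; rewrite /L /lost inE /pres negbK => pe.
have eL' : e \notin L by rewrite /L /lost inE /pres negbK.
rewrite (shift e eL' _ _ (same e eL')).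
rewrite [X in _ || X](shift e eL' _ _ (esym (same e eL'))).
by case: (s e) pe => ->; rewrite ?orbT.
Qed.

Lemma codes_card M : (#|Codes M| <=
   (\sum_(L : {set Ety} | (M * #|L| < m)%N) 2 ^ #|L|) * 2 ^ gn G)%N.
Proof.
rewrite /Codes (card_pair (fun (lt : {set Ety} * {set Ety}) (f : {ffun V -> 'Z_3}) =>
   [&& (M * #|lt.1| < m)%N, lt.2 \subset lt.1 & normal lt.1 f])).
apply: (@leq_trans (\sum_(lt : {set Ety} * {set Ety}) ((M * #|lt.1| < m)%N && (lt.2 \subset lt.1)) * 2 ^ gn G)).
  apply: leq_sum => lt _.
  case: (boolP ((M * #|lt.1| < m)%N && (lt.2 \subset lt.1))) => [/andP [h1 h2] | h].
    rewrite mul1n; apply: leq_trans (card_normal lt.1); apply: subset_leq_card.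
    by apply/subsetP => f; rewrite !inE h1 h2.
  rewrite mul0n leqn0 cards_eq0; apply/eqP/setP => f; rewrite !inE.
  by move: h; case: (_ < _)%N; case: (_ \subset _).
rewrite -big_distrl /= leq_mul2r; apply/orP; right.
rewrite -(pair_big predT predT (fun (L T : {set Ety}) => nat_of_bool ((M * #|L| < m)%N && (T \subset L)))) /=.
rewrite [X in (_ <= X)%N]big_mkcond /=; apply: leq_sum => L _.
case: ifP => hL.
  rewrite -card_powerset -sum1_card /=; apply: eq_leq.
  rewrite [RHS]big_mkcond; apply: eq_bigr => T _.
  by rewrite powersetE.
by rewrite big1.
Qed.

End Count.

Lemma sum_sets (E : finType) K :
  \sum_(L : {set E}) 2 ^ #|L| * K ^ (#|E| - #|L|) = (K + 2) ^ #|E|.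
Proof.
have e1 : (K + 2) ^ #|E| = \prod_(e : E) \sum_(b : bool) (if b then 2 else K).
  rewrite -prod_nat_const; apply: eq_bigr => e _.
  by rewrite big_bool /= addnC.
rewrite e1 bigA_distr_bigA /=.
rewrite (reindex (fun g : {ffun E -> bool} => [set e | g e])) /=; last first.
  exists (fun L : {set E} => [ffun e => e \in L]) => g _.
    by apply/ffunP => e; rewrite ffunE inE.
  by apply/setP => e; rewrite inE ffunE.
apply: eq_bigr => g _; apply: esym.
rewrite (bigID g) /=.
rewrite (eq_bigr (fun _ => 2)); last by move=> e ->.
rewrite [X in _ * X](eq_bigr (fun _ => K)); last by move=> e /negPf ->.
have h : #|E| - #|[set e | g e]| = #|~: [set e | g e]| by rewrite (cardsCs (~: [set e | g e])) setCK.
rewrite !prod_nat_const h; congr (2 ^ _ * K ^ _).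
  by apply: eq_card => e; rewrite inE.
by apply: eq_card => e; rewrite !inE.
Qed.

Lemma expn_mono a b e : a <= b -> a ^ e <= b ^ e.
Proof. by move=> ab; elim: e => // e IH; rewrite !expnS leq_mul. Qed.

Lemma bern_nat N K : 2 * N + 2 <= K -> (K + 2) ^ N * (K - 2 * N) <= K ^ N.+1.
Proof.
elim: N => [|N IH] hK; first by rewrite !expn0 expn1 mul1n subn0.
have hK' : 2 * N + 2 <= K by lia.
have := IH hK'.
have h2 : (K + 2) * (K - 2 * N.+1) <= K * (K - 2 * N) by nia.
move=> h1; rewrite !expnS in h1 *.
move: h1 h2; set A := (K + 2) ^ N; set B := K ^ N => h1 h2.
have h3 := leq_mul h2 (leqnn A); have h4 := leq_mul h1 (leqnn K).
nia.
Qed.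

Lemma aux1 q m : 0 < q -> (2 * q - 2) * m = 2 * ((q - 1) * m).
Proof. by case: q => // q _; rewrite subn1 /= mulnS addKn mulnA. Qed.

Lemma aux2 m q : 0 < m -> 0 < q -> m * (2 * q) = ((m - 1) + m + (2 * q - 2) * m).+1.
Proof.
case: m => // m _; case: q => // q _; rewrite !subn1 /= mulnS addKn.
ring.
Qed.

Lemma count_bound (E : finType) n q : 0 < q -> 0 < #|E| -> q * n <= (q - 1) * #|E| ->
  (\sum_(L : {set E} | 2 * q * (8 * q) * #|L| < #|E|) 2 ^ #|L|) * 2 ^ n < 2 ^ #|E|.
Proof.
move=> q0 m0 hqn.
set m := #|E|; set K := 8 * q; set M := 2 * q * K.
set S := \sum_(L : {set E} | _) _.
have K0 : 0 < K by rewrite /K; lia.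
have M0 : 0 < M by rewrite /M; lia.
set T := (m - 1) %/ M.
have step1 : K ^ m * S <= K ^ T * (K + 2) ^ m.
  rewrite -(sum_sets E K) big_distrr /=.
  apply: (@leq_trans (\sum_(L : {set E} | M * #|L| < m) K ^ T * (2 ^ #|L| * K ^ (m - #|L|)))).
    apply: leq_sum => L hL.
    have LT : #|L| <= T by rewrite /T leq_divRL // mulnC; move: hL; move: (M * #|L|) => a; lia.
    have Lm : #|L| <= m by apply: leq_trans (leq_pmull _ M0) (ltnW hL).
    have eK : K ^ m = K ^ (m - #|L|) * K ^ #|L| by rewrite -expnD subnK.
    have hb := leq_pexp2l K0 LT.
    rewrite eK; move: hb; set a := K ^ (m - #|L|); set b := K ^ #|L|; set c := K ^ T; set d := 2 ^ #|L|.
    move=> hb; have := leq_mul (leqnn (a * d)) hb; nia.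
  rewrite -big_distrr /= leq_mul2l; apply/orP; right.
  rewrite [X in _ <= X](bigID (fun L : {set E} => M * #|L| < m)) /=.
  exact: leq_addr.
have step2 : (K ^ T * (K + 2) ^ m * 2 ^ n) ^ (2 * q) < (2 ^ m * K ^ m) ^ (2 * q).
  have a1 : K ^ (T * (2 * q)) <= 2 ^ (m - 1).
    rewrite mulnC expnM.
    have hK2 : K ^ (2 * q) <= 2 ^ M.
      rewrite /M (mulnC (2 * q) K) [X in _ <= X]expnM; apply: expn_mono; apply: ltnW; apply: ltn_expl; lia.
    apply: leq_trans (@expn_mono _ _ T hK2) _.
    rewrite -expnM leq_exp2l // mulnC; rewrite /T.
    by rewrite -leq_divRL.
  have b2 : (K + 2) ^ (2 * q) <= 2 * K ^ (2 * q).
    have := @bern_nat (2 * q) K.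
    rewrite {1 2 4}/K => /(_ ltac:(lia)) h.
    have e : 8 * q - 2 * (2 * q) = 4 * q by lia.
    rewrite e expnS in h.
    rewrite -(@leq_pmul2r (4 * q)); last by lia.
    apply: leq_trans h _; apply: eq_leq; rewrite /K; ring.
  have a2 : (K + 2) ^ (m * (2 * q)) <= 2 ^ m * K ^ (m * (2 * q)).
    rewrite (mulnC m (2 * q)) (expnM (K + 2)) (expnM K) -expnMn; exact: expn_mono.
  have a3 : 2 ^ (n * (2 * q)) <= 2 ^ ((2 * q - 2) * m).
    by rewrite leq_exp2l // (aux1 m q0) (mulnC n) -mulnA leq_mul2l; apply/orP; right; move: hqn; rewrite /m; lia.
  have e4 : 2 ^ (m * (2 * q)) = 2 * (2 ^ (m - 1) * 2 ^ m * 2 ^ ((2 * q - 2) * m)).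
    rewrite -!expnD -expnS; congr (2 ^ _); exact: aux2.
  rewrite (expnMn (K ^ T * (K + 2) ^ m)) (expnMn (K ^ T)) (expnMn (2 ^ m)).
  rewrite -(expnM K T) -(expnM (K + 2) m) -(expnM 2 n) -(expnM 2 m) -(expnM K m).
  rewrite e4.
  move: a1 a2 a3; set x1 := K ^ _; set x2 := (K + 2) ^ _; set x3 := 2 ^ (n * _).
  set y1 := 2 ^ (m - 1); set y2 := 2 ^ m; set y3 := 2 ^ ((2 * q - 2) * m); set z := K ^ (m * _).
  move=> a1 a2 a3.
  have H := leq_mul (leq_mul a1 a2) a3.
  have zp : 0 < z by rewrite expn_gt0 K0.
  have y1p : 0 < y1 by rewrite expn_gt0.
  have y2p : 0 < y2 by rewrite expn_gt0.
  have y3p : 0 < y3 by rewrite expn_gt0.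
  apply: leq_ltn_trans H _.
  have -> : 2 * (y1 * y2 * y3) * z = (y1 * (y2 * z) * y3) * 2 by ring.
  by rewrite ltn_Pmulr // !muln_gt0 y1p y2p zp y3p.
have step3 : K ^ T * (K + 2) ^ m * 2 ^ n < 2 ^ m * K ^ m.
  by rewrite -(@ltn_exp2r _ _ (2 * q)) //; lia.
rewrite -(@ltn_pmul2l (K ^ m)); last by rewrite expn_gt0 K0.
have step4 : K ^ m * S * 2 ^ n <= K ^ T * (K + 2) ^ m * 2 ^ n by rewrite leq_mul2r step1 orbT.
rewrite mulnA; apply: leq_ltn_trans step4 _; rewrite (mulnC (K ^ m)); exact: step3.
Qed.

Section Orient.
Variable G : graph.
Local Notation V := 'I_(gn G).
Local Notation adj := (@gadj G).
Local Notation E := (Ety G).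
Local Notation m := #|{: E}|.

Lemma good_exists q : (0 < q)%N -> (0 < m)%N -> (q * gn G <= (q - 1) * m)%N ->
  exists s : {ffun E -> bool}, forall f : {ffun V -> 'Z_3}, ~~ (2 * q * (8 * q) * #|lost s f| < m)%N.
Proof.
move=> q0 m0 hq.
have hc := count_bound q0 m0 hq.
set bad := [set s | [exists f : {ffun V -> 'Z_3}, (2 * q * (8 * q) * #|lost s f| < m)%N]].
have hb := leq_trans (subset_leq_card (@bad_sub G (2 * q * (8 * q))))
   (leq_trans (leq_imset_card _ _) (@codes_card G _)).
have hlt : (#|bad| < #|{: {ffun E -> bool}}|)%N.
  by rewrite card_ffun card_bool; apply: leq_ltn_trans hb hc.
case: (pickP (fun s => s \notin bad)) => [s hs | none].
  by exists s => f; apply/negP => hf; move: hs; rewrite inE negb_exists => /forallP /(_ f); rewrite hf.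
have : bad = setT by apply/setP => s; move: (none s) => /= /negbFE ->; rewrite inE.
by move=> eb; move: hlt; rewrite eb cardsT ltnn.
Qed.


Definition orel (s : {ffun E -> bool}) : rel V := fun u v =>
  [exists e : E, ((val e == (u, v)) && s e) || ((val e == (v, u)) && ~~ s e)].

Definition dir (s : {ffun E -> bool}) (e : E) : V * V :=
  if s e then val e else ((val e).2, (val e).1).

Lemma E_lt (e : E) : ((val e).1 < (val e).2)%N.
Proof. by case: e => -[a b] /= /andP []. Qed.

Lemma E_adj (e : E) : adj (val e).1 (val e).2.
Proof. by case: e => -[a b] /= /andP []. Qed.

Lemma dir_inj s : injective (dir s).
Proof.
move=> e1 e2; rewrite /dir.
have l1 := E_lt e1; have l2 := E_lt e2.
case: (s e1); case: (s e2) => h.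
- exact: val_inj.
- by move: l1 l2; rewrite h /=; lia.
- by move: l1 l2; rewrite -h /=; lia.
- apply: val_inj; rewrite [val e1]surjective_pairing [val e2]surjective_pairing.
  by case: h => -> ->.
Qed.

Lemma orel_dir s u v : orel s u v = ((u, v) \in dir s @: setT).
Proof.
apply/existsP/imsetP => [[e /orP [] /andP [/eqP ev se]] | [e _ ev]].
- by exists e => //; rewrite /dir se ev.
- by exists e => //; rewrite /dir (negPf se) ev.
- exists e; move: ev; rewrite /dir; case: (s e) => ev.
    by rewrite -ev eqxx.
  have -> : val e = (v, u) by rewrite [val e]surjective_pairing; case: ev => -> ->.
  by rewrite eqxx orbT.
Qed.

Lemma sum_orel s (P : V -> V -> bool) :
  \sum_(u : V) \sum_(v : V) (orel s u v && P u v : nat) =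
  \sum_(e : E) ((if s e then P (val e).1 (val e).2 else P (val e).2 (val e).1) : nat).
Proof.
rewrite pair_big /=.
rewrite (eq_bigr (fun p : V * V => if p \in dir s @: setT then (P p.1 p.2 : nat) else 0%N)); last first.
  by move=> [u v] _ /=; rewrite orel_dir; case: (_ \in _).
rewrite -big_mkcond /= big_imset /=; last by move=> x y _ _; exact: dir_inj.
apply: eq_big => [e|e _]; first by rewrite inE.
by rewrite /dir; case: (s e).
Qed.

Lemma orel_orient s : is_orientation (orel s).
Proof.
move=> u v; split.
  apply/idP/idP => [auv | ].
    have uv : u != v by apply/eqP => euv; move: auv; rewrite euv (@gadj_irr G).
    case: (ltngtP u v) => [luv | lvu | euv]; last by move: uv; rewrite (val_inj euv) eqxx.
      have pe : Epred (u, v) by rewrite /Epred /= auv luv.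
      pose e : E := exist _ (u, v) pe.
      apply/orP; case se: (s e); [left | right]; apply/existsP; exists e; by rewrite /= eqxx se ?orbT.
    have pe : Epred (v, u) by rewrite /Epred /= (@gadj_sym G) auv lvu.
    pose e : E := exist _ (v, u) pe.
    apply/orP; case se: (s e); [right | left]; apply/existsP; exists e; by rewrite /= eqxx se ?orbT.
  case/orP => /existsP [e /orP [] /andP [/eqP ev _]]; have := E_adj e; rewrite ev //=;
    by rewrite (@gadj_sym G).
apply/negP => /andP [/existsP [e1 h1] /existsP [e2 h2]].
have l1 := E_lt e1; have l2 := E_lt e2.
move: h1 h2 => /orP [] /andP [/eqP v1 s1] /orP [] /andP [/eqP v2 s2].
- by move: l1 l2; rewrite v1 v2 /=; lia.
- have e12 : e1 = e2 by apply: val_inj; rewrite v1 v2.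
  by move: s2; rewrite -e12 s1.
- have e12 : e1 = e2 by apply: val_inj; rewrite v1 v2.
  by move: s1; rewrite e12 s2.
- by move: l1 l2; rewrite v1 v2 /=; lia.
Qed.

End Orient.

From mathcomp Require Import all_classical all_reals.
From mathcomp Require Import ereal sequences exp.
From mathcomp Require Import lra.
Import Order.TTheory GRing.Theory Num.Theory.
Local Open Scope ring_scope.

Definition oval (A B : struct) (h : {ffun 'I_(sdom A) -> 'I_(sdom B)}) : rat :=
  \sum_(u : 'I_(sdom A)) \sum_(v : 'I_(sdom A)) @srel A u v * @srel B (h u) (h v).

Arguments oval : clear implicits.

Lemma oval_ge0 A B h : 0 <= oval A B h.
Proof. by apply: sumr_ge0 => u _; apply: sumr_ge0 => v _; apply: mulr_ge0; apply: srel_ge0. Qed.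

Lemma opt_ge A B h : oval A B h <= opt A B.
Proof. rewrite /opt; exact: (le_bigmax _ (fun h => oval A B h) h). Qed.

Lemma opt_le A B X : 0 <= X -> (forall h, oval A B h <= X) -> opt A B <= X.
Proof. by move=> X0 H; rewrite /opt; apply: bigmax_le => // h _; exact: H. Qed.

Lemma opt_ge0 A B : 0 <= opt A B.
Proof. by rewrite /opt; apply: bigmax_ge_id. Qed.

Lemma lndistC (R : realType) a b : lndist R a b = lndist R b a.
Proof. by rewrite /lndist andbC orbC distrC. Qed.

Lemma lnd_le (R : realType) (eps : R) (a b : rat) : 0 <= a -> 0 <= b ->
  (lndist R a b <= eps%:E)%E -> ratr a <= expR eps * ratr b.
Proof.
move=> a0 b0; rewrite /lndist.
case: (eqVneq a 0) => [-> _| an0]; first by rewrite rmorph0 mulr_ge0 ?expR_ge0 // ler0q.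
case: (eqVneq b 0) => [-> | bn0] /=; first by rewrite leye_eq.
rewrite lee_fin => /ler_normlW h.
have ap : 0 < (ratr a : R) by rewrite ltr0q lt_def an0.
have bp : 0 < (ratr b : R) by rewrite ltr0q lt_def bn0.
rewrite -[X in X <= _](lnK ap) -[X in _ <= _ * X](lnK bp) -expRD ler_expR.
lra.
Qed.

Lemma dopt_lnd (R : realType) A B (eps : R) : (dopt R A B <= eps%:E)%E ->
  forall C, (lndist R (opt A C) (opt B C) <= eps%:E)%E.
Proof.
move=> h C; apply: le_trans h; apply: ereal_sup_ubound; by exists C.
Qed.

Definition c3rel : rel 'I_3 := fun i j => ((j : 'Z_3) == (i : 'Z_3) + 1)%R.
Definition C3 := struct_of_rel c3rel.

Section Main.
Variable G : graph.
Local Notation V := 'I_(gn G).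
Local Notation E := (Ety G).
Local Notation m := #|{: E}|.

Lemma srel_of n (o : rel 'I_n) u v : @srel (struct_of_rel o) u v = (o u v)%:R.
Proof. by []. Qed.

Lemma val_AA (s : {ffun E -> bool}) :
  (m%:R : rat) <= opt (struct_of_rel (orel s)) (struct_of_rel (orel s)).
Proof.
apply: le_trans (@opt_ge (struct_of_rel (orel s)) (struct_of_rel (orel s)) [ffun x => x]).
rewrite /oval.
have -> : m = (\sum_(u : V) \sum_(v : V) (orel s u v && true : nat))%N.
  rewrite sum_orel /= -sum1_card.
  by apply: eq_bigr => e _; case: (s e).
rewrite natr_sum; apply: ler_sum => u _; rewrite natr_sum; apply: ler_sum => v _.
by rewrite !srel_of !ffunE; case: (orel s u v); rewrite ?mulr1 ?mulr0.
Qed.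

Lemma sum_pres (s : {ffun E -> bool}) (f : {ffun V -> 'Z_3}) :
  (\sum_(e : E) (pres s f e : nat) + #|lost s f|)%N = m.
Proof.
rewrite -[RHS]sum1_card [RHS](bigID (fun e => pres s f e)) /=; congr (_ + _)%N.
  by rewrite [RHS]big_mkcond /=; apply: congr_big => // e _; case: (pres s f e).
by rewrite -sum1dep_card; apply: eq_bigl => e.
Qed.

Lemma val_AC (s : {ffun E -> bool}) (M : nat) : (0 < M)%N ->
  (forall f : {ffun V -> 'Z_3}, ~~ (M * #|lost s f| < m)%N) ->
  opt (struct_of_rel (orel s)) C3 <= m%:R - m%:R / M%:R.
Proof.
move=> M0 good.
have M0' : 0 < (M%:R : rat) by rewrite ltr0n.
have key : forall l : nat, (m <= M * l)%N -> (m - l)%:R <= (m%:R - m%:R / M%:R : rat).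
  move=> l hl.
  have hl' : (m%:R : rat) / M%:R <= l%:R.
    by rewrite ler_pdivrMr // -natrM ler_nat mulnC.
  case: (leqP l m) => lm.
    by rewrite natrB // lerD2l lerN2.
  have -> : (m - l)%N = 0%N by apply/eqP; rewrite subn_eq0 ltnW.
  rewrite subr_ge0 ler_pdivrMr // -natrM ler_nat; apply: leq_pmulr.
  exact: M0.
apply: opt_le.
  rewrite subr_ge0 ler_pdivrMr // -natrM ler_nat; apply: leq_pmulr => //.
move=> h.
have hf := good (h : {ffun V -> 'Z_3}).
rewrite -leqNgt in hf.
apply: le_trans (key _ hf).
rewrite -(sum_pres s (h : {ffun V -> 'Z_3})) addnK.
rewrite /oval.
have -> : (\sum_(e : E) (pres s (h : {ffun V -> 'Z_3}) e : nat))%N =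
    (\sum_(u : V) \sum_(v : V) (orel s u v && ((h v : 'Z_3) == (h u : 'Z_3) + 1)%R : nat))%N.
  by rewrite sum_orel.
rewrite natr_sum; apply: ler_sum => u _; rewrite natr_sum; apply: ler_sum => v _.
by rewrite !srel_of /c3rel; case: (orel s u v); case: (_ == _); rewrite ?mulr1 ?mulr0.
Qed.

Lemma val_BA (B : struct) (s : {ffun E -> bool}) (g : nat) :
  girth_ge G g -> (sdom B < g)%N ->
  opt B (struct_of_rel (orel s)) <= opt B C3.
Proof.
move=> gG Bg.
apply: opt_le; first exact: opt_ge0.
move=> h.
have hI : (#|h @: setT| < g)%N.
  apply: leq_ltn_trans (leq_imset_card _ _) _; apply: leq_ltn_trans (max_card _) _; by rewrite card_ord.
have [f hf] := local_label gG (orel_orient s) hI.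
apply: le_trans (@opt_ge B C3 [ffun x => (f (h x) : 'I_3)]).
apply: ler_sum => u _; apply: ler_sum => v _.
rewrite !srel_of; apply: ler_wpM2l; first exact: srel_ge0.
case o: (orel s (h u) (h v)) => //.
rewrite ler_nat /c3rel !ffunE.
by rewrite (hf _ _ (imset_f _ (in_setT u)) (imset_f _ (in_setT v)) o) eqxx.
Qed.

End Main.

Lemma deg_sum (G : graph) (s : {ffun Ety G -> bool}) :
  (\sum_(v : 'I_(gn G)) gdeg v = 2 * #|{: Ety G}|)%N.
Proof.
have hm : (\sum_(u : 'I_(gn G)) \sum_(v : 'I_(gn G)) (orel s u v && true : nat))%N = #|{: Ety G}|.
  rewrite sum_orel /= -sum1_card.
  by apply: congr_big => // e _; case: (s e).
rewrite mul2n -addnn -{1}hm -[X in (_ = _ + X)%N]hm [X in (_ = _ + X)%N]exchange_big -big_split /=.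
apply: congr_big => // u _.
rewrite /gdeg -sum1dep_card big_mkcond -big_split /=.
apply: congr_big => // v _.
have [-> nb] := orel_orient s u v.
move: nb; case: (orel s u v); case: (orel s v u) => //.
Qed.

Unset Implicit Arguments.

Theorem lemma48 (R : realType) (delta : R) (cG : graph -> Prop) :
  0 < delta ->
  (forall G, cG G -> 2 + delta <= avg_degree R G) ->
  unbounded_girth cG ->
  ~ size_pliable R (orientations_of cG).
Proof.
move=> d0 hdeg hgir hsp.
pose q := (Num.truncn (2 / delta)).+2.
have q0 : (0 < q)%N by [].
have hQ : 2 / delta <= (q%:R - 1 : R).
  have := truncnS_gt (2 / delta).
  by rewrite /q (mulrSr 1 (Num.Def.trunc (2 / delta)).+1) addrK => /ltW.
pose M := (2 * q * (8 * q))%N.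
have M0 : (0 < M)%N by rewrite /M; lia.
have M0' : 0 < (M%:R : R) by rewrite ltr0n.
pose r : R := 1 + 1 / M%:R.
have r1 : 1 < r by rewrite /r ltrDl divr_gt0.
have r0 : 0 < r by apply: lt_trans r1.
pose eps := ln r / 2.
have eps0 : 0 < eps by rewrite /eps divr_gt0 // ln_gt0.
have [k hk] := hsp eps eps0.
have [G [cGG gG]] := hgir k.+1.
have dG := hdeg G cGG.
set n := gn G in dG.
set m := #|{: Ety G}|.
have hsum := deg_sum [ffun => true] : (\sum_(v : 'I_(gn G)) gdeg v = 2 * m)%N.
have n0 : (0 < n)%N.
  case: (posnP n) => // en.
  move: dG; rewrite /avg_degree.
  have -> : ((gn G)%:R : R) = 0 by rewrite -/n en.
  rewrite invr0 mulr0 => h.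
  have : (0 : R) < 2 + delta by apply: addr_gt0.
  by rewrite ltNge h.
have hnm : (2 + delta) * n%:R <= 2 * m%:R.
  move: dG; rewrite /avg_degree -/n hsum ler_pdivlMr ?ltr0n // natrM.
  done.
have hqn : (q * n <= (q - 1) * m)%N.
  rewrite -(ler_nat R) !natrM natrB // .
  have Q0 : 0 <= (q%:R - 1 : R) by apply: le_trans hQ; apply: divr_ge0 => //; apply: ltW.
  have hQd : 2 <= (q%:R - 1) * delta by rewrite -ler_pdivrMr.
  have nn : 0 <= (n%:R : R) by [].
  nra.
have m0 : (0 < m)%N.
  case: (posnP m) => // em.
  have := muln_gt0 q n; rewrite q0 n0 /= => h.
  by move: hqn; rewrite em muln0 leqn0 => /eqP h'; rewrite h' in h.
have [s hs] := good_exists q0 m0 hqn.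
pose A := struct_of_rel (orel s).
have oA : orientations_of cG A.
  by exists G; split => //; exists (orel s); split => //; exact: orel_orient.
have [B [Bk dB]] := hk A oA.
have hAA := val_AA s.
have h1 := lnd_le (opt_ge0 A A) (opt_ge0 B A) (dopt_lnd dB A).
have h2 := val_BA s gG (_ : (sdom B < k.+1)%N).
have h3 : ratr (opt B C3) <= expR eps * ratr (opt A C3) :> R.
  apply: lnd_le; [exact: opt_ge0 | exact: opt_ge0 |].
  by rewrite lndistC; exact: dopt_lnd dB C3.
have h4 := val_AC M0 hs.
have EE : expR eps * expR eps = r.
  by rewrite -expRD (_ : eps + eps = ln r) ?lnK ?posrE // /eps; field.
pose x : R := m%:R.
have x0 : 0 < x by rewrite ltr0n.
have a1 : x <= ratr (opt A A) by rewrite /x -(ratr_nat R) ler_rat.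
have a2 : ratr (opt B A) <= ratr (opt B C3) :> R by rewrite ler_rat; apply: h2; rewrite ltnS.
have a4 : ratr (opt A C3) <= x - x / M%:R.
  have : ratr (opt A C3) <= ratr (m%:R - m%:R / M%:R : rat) :> R by rewrite ler_rat.
  by rewrite rmorphB /= fmorph_div /= !ratr_nat.
have Ep : 0 <= expR eps by exact: expR_ge0.
have b1 : x <= expR eps * (expR eps * ratr (opt A C3)).
  apply: le_trans a1 (le_trans h1 _); rewrite ler_wpM2l //; exact: le_trans a2 h3.
have b2 : x <= r * (x - x / M%:R).
  by rewrite -EE -mulrA; apply: le_trans b1 _; rewrite !ler_wpM2l // mulr_ge0.
move: b2; rewrite /r.
set y := 1 / M%:R.
have y0 : 0 < y by rewrite /y divr_gt0.
have -> : x / M%:R = x * y by rewrite /y mulrA mulr1.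
have hp : 0 < x * (y * y) by apply: mulr_gt0 => //; apply: mulr_gt0.
have -> : (1 + y) * (x - x * y) = x - x * (y * y) by ring.
lra.
Qed.
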